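(* In the polarized setting below, assume $w\ge2$ and keep the operators $D^0(t)$, $D^{\pm}_p(t)$ ($t\in H^0$) defined below. For $(z,\mathbf x,\mathbf y)\in\mathbf C\times\mathbf C^{w-1}\times\mathbf C^{w-1}$, $\mathbf x=(x_0,\dots,x_{w-2})$, $\mathbf y=(y_0,\dots,y_{w-2})$, define for $t\in H^0$ the endomorphism of $V_w$ $$D_{(z,\mathbf x,\mathbf y)}(t)=z\,D^0(t)+\sum_{p=0}^{w-2}x_p\,D^+_p(t)\pi_p+\sum_{p=0}^{w-2}y_p\,D^-_{p+1}(t)\pi_{p+1},$$ where $\pi_p:V_w\to H^p$ is the projection. If $x_py_p=z^2$ for all $p=0,\dots,w-2$, then $D_{(z,\mathbf x,\mathbf y)}(t)D_{(z,\mathbf x,\mathbf y)}(t')=D_{(z,\mathbf x,\mathbf y)}(t')D_{(z,\mathbf x,\mathbf y)}(t)$ for all $t,t'\in H^0$; i.e. the morphism $D_{(z,\mathbf x,\mathbf y)}:V_w\to(H^0)^*\otimes V_w$ satisfies $D_{(z,\mathbf x,\mathbf y)}\wedge D_{(z,\mathbf x,\mathbf y)}=0$ (it is a Higgs morphism). Thus the affine variety $\hat H=\{(z,\mathbf x,\mathbf y): x_py_p=z^2,\ p=0,\dots,w-2\}$ parametrizes such Higgs morphisms.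
   Context: Polarized setting. Let $X$ be a smooth complex projective variety of dimension $n\ge2$ with canonical divisor $K_X$, $\mathcal E$ a rank $n$ holomorphic vector bundle with $\mathcal O_X(L)=\det\mathcal E$ and $H^i(\mathcal O_X(-L))=0$ for $i\le n-1$. Let $e\in H^0(\mathcal E)$ be a section whose zero scheme $Z=Z_e$ is a finite set of $d$ distinct reduced points. Put $A=H^0(\mathcal O_Z)$ and $E_Z=\mathrm{Ext}^{n-1}(\mathcal I_Z(L),\mathcal O_X)$, viewed via Serre duality $E_Z\cong H^1(\mathcal I_Z(L+K_X))^*$ and dualizing the surjection $H^0(\mathcal O_Z(L+K_X))\to H^1(\mathcal I_Z(L+K_X))$ as a subspace of $H^0(\mathcal O_Z(L+K_X))^*\cong H^0(\omega_Z\otimes\mathcal O_X(-L-K_X))$, sections of an invertible sheaf on $Z$. An element $\alpha\in E_Z$ is regular if $f\mapsto f\alpha$ is an isomorphism $A\to H^0(\mathcal O_Z(L+K_X))^*$ (i.e. $\alpha$ vanishes at no point of $Z$). For regular $\alpha$ put $V_1=\{\beta/\alpha:\beta\in E_Z\}\subset A$ (it contains $1$), let $V_k$ be the span of all products of $k$ elements of $V_1$ (so $V_1\subset V_2\subset\cdots$), $V_0=0$, and let $w\ge1$ be the least integer with $V_k=V_w$ for all $k\ge w$. Let $q(f,g)=\sum_{z\in Z}f(z)g(z)$ be the trace form on $A$; $\alpha$ is polarizing if it is regular and $q|_{V_k}$ is non-degenerate for all $k\ge1$. For polarizing $\alpha$ define $H^p=V_p^{\perp}\cap V_{p+1}$ for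 $0\le p\le w-1$ and $H^w=V_w^{\perp}$, orthogonal complements taken in $A$ with respect to $q$. Then $A=\bigoplus_{p=0}^wH^p$, $H^0=V_1$ and $V_w=\bigoplus_{p=0}^{w-1}H^p$. For $t\in H^0$, multiplication by $t$ preserves $V_w$ and maps $H^p$ into $H^{p-1}\oplus H^p\oplus H^{p+1}$; $D^-_p(t):H^p\to H^{p-1}$, $D^0_p(t):H^p\to H^p$, $D^+_p(t):H^p\to H^{p+1}$ denote the components of multiplication by $t$ restricted to $H^p$, and $D^0(t)=\sum_{p=0}^{w-1}D^0_p(t)\pi_p$. *)

(* Defs.v *)
From HB Require Import structures.
From mathcomp Require Import all_boot all_order all_algebra.
From mathcomp Require Import complex.
From mathcomp Require Import Rstruct.
Set Implicit Arguments. Unset Strict Implicit. Unset Printing Implicit Defensive.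
Import GRing.Theory.
Local Open Scope ring_scope.

Definition Cplx : fieldType := Rdefinitions.R[i].

Section Polarized.
Variables (K : fieldType) (Z : finType).

(* A = H^0(O_Z) = functions on the finite reduced set Z, as a K-vector space *)
Definition fnZ := {ffun Z -> K^o}.

Definition fmul (f g : fnZ) : fnZ := [ffun z => (f z : K) * g z].
Definition fone : fnZ := [ffun => (1 : K)].
Definition fdiv (f g : fnZ) : fnZ := [ffun z => (f z : K) / g z].

Definition trq (f g : fnZ) : K := \sum_(z : Z) (f z : K) * g z.

Definition regular (alpha : fnZ) : Prop := forall z : Z, (alpha z : K) != 0.

Definition V1of (E : {vspace fnZ}) (alpha : fnZ) : {vspace fnZ} :=
  <<[seq fdiv b alpha | b <- vbasis E]>>%VS.

Definition prodv (U W : {vspace fnZ}) : {vspace fnZ} :=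
  <<[seq fmul u v | u <- vbasis U, v <- vbasis W]>>%VS.

Fixpoint Vk (V1 : {vspace fnZ}) (k : nat) : {vspace fnZ} :=
  match k with
  | 0 => 0%VS
  | 1 => V1
  | k'.+1 => prodv (Vk V1 k') V1
  end.

Definition stable_from (V1 : {vspace fnZ}) (w : nat) : Prop :=
  forall k, (w <= k)%N -> Vk V1 k = Vk V1 w.
Definition is_w (V1 : {vspace fnZ}) (w : nat) : Prop :=
  [/\ (1 <= w)%N, stable_from V1 w &
      forall w', (1 <= w')%N -> stable_from V1 w' -> (w <= w')%N].

Definition nondeg (U : {vspace fnZ}) : Prop :=
  forall u, u \in U -> (forall v, v \in U -> trq u v = 0) -> u = 0.

Definition polarizing (E : {vspace fnZ}) (alpha : fnZ) : Prop :=
  regular alpha /\ forall k, (1 <= k)%N -> nondeg (Vk (V1of E alpha) k).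

Definition orthv (U : {vspace fnZ}) : {vspace fnZ} :=
  lker (linfun (fun f : fnZ =>
     [ffun i : 'I_(\dim U) => (trq f (tnth (vbasis U) i) : K^o)])).

Definition Hp (V1 : {vspace fnZ}) (w p : nat) : {vspace fnZ} :=
  if (p < w)%N then (orthv (Vk V1 p) :&: Vk V1 p.+1)%VS
  else orthv (Vk V1 w).

Definition pip (V1 : {vspace fnZ}) (w p : nat) : fnZ -> fnZ :=
  daddv_pi (Hp V1 w p) (\sum_(q < w.+1 | q != p :> nat) Hp V1 w q)%VS.

(* pi_a (t * pi_b f) : the component H^b -> H^a of multiplication by t *)
Definition Dcomp (V1 : {vspace fnZ}) (w : nat) (t : fnZ) (a b : nat)
  (f : fnZ) : fnZ := pip V1 w a (fmul t (pip V1 w b f)).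

Definition Dzxy (V1 : {vspace fnZ}) (w : nat) (zz : K)
  (x y : 'I_w.-1 -> K) (t f : fnZ) : fnZ :=
  zz *: (\sum_(p < w) Dcomp V1 w t p p f)
  + \sum_(p < w.-1) x p *: Dcomp V1 w t p.+1 p f
  + \sum_(p < w.-1) y p *: Dcomp V1 w t p p.+1 f.

End Polarized.
Arguments Dzxy [K Z] V1 w zz x y t f.
Arguments Dcomp [K Z] V1 w t a b f.

(* Main.v *)
Require Import Defs.
From HB Require Import structures.
From mathcomp Require Import all_boot all_order all_algebra.
From mathcomp Require Import complex.
From mathcomp Require Import Rstruct.
From mathcomp Require Import zify ring.
Unset Printing Implicit Defensive.
Import GRing.Theory.
Local Open Scope ring_scope.

Section S.
Variables (K : fieldType) (Z : finType).
Local Notation fn := (fnZ K Z).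

Lemma fmulC (f g : fn) : fmul f g = fmul g f.
Proof. by apply/ffunP=> z; rewrite !ffunE mulrC. Qed.
Lemma fmulA (f g h : fn) : fmul f (fmul g h) = fmul (fmul f g) h.
Proof. by apply/ffunP=> z; rewrite !ffunE mulrA. Qed.
Lemma fmul1 (f : fn) : fmul (fone K Z) f = f.
Proof. by apply/ffunP=> z; rewrite !ffunE mul1r. Qed.
Lemma fmul_linear (t : fn) : linear (fmul t).
Proof. move=> a f g; apply/ffunP=> z; rewrite !ffunE /= mulrDr; congr (_ + _).
by rewrite /GRing.scale /= mulrCA. Qed.
HB.instance Definition _ (t : fn) := GRing.isLinear.Build _ _ _ _ (fmul t) (fmul_linear t).
Lemma fmulDr t (f g : fn) : fmul t (f + g) = fmul t f + fmul t g.
Proof. exact: linearD. Qed.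
Lemma fmulZr t a (f : fn) : fmul t (a *: f) = a *: fmul t f.
Proof. exact: linearZ. Qed.
Lemma fmul_sumr t I (r : seq I) P (F : I -> fn) :
  fmul t (\sum_(i <- r | P i) F i) = \sum_(i <- r | P i) fmul t (F i).
Proof. exact: linear_sum. Qed.
Lemma fmulBr t (f g : fn) : fmul t (f - g) = fmul t f - fmul t g.
Proof. exact: linearB. Qed.
Lemma fmul0r t : fmul t (0 : fn) = 0.
Proof. exact: linear0. Qed.

Lemma trqC (f g : fn) : trq f g = trq g f.
Proof. by apply: eq_bigr => z _; rewrite mulrC. Qed.
Definition trqr (g : fn) (f : fn) : K^o := trq f g.
Lemma trq_linear (g : fn) : linear (trqr g).
Proof. move=> a f h; rewrite /trqr /trq /= [in RHS]/GRing.scale /= mulr_sumr -big_split /=.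
by apply: eq_bigr=> z _; rewrite !ffunE /= mulrDl mulrA. Qed.
HB.instance Definition _ (g : fn) := GRing.isLinear.Build _ _ _ _ (trqr g) (trq_linear g).
Lemma trqDl (f h g : fn) : trq (f + h) g = trq f g + trq h g.
Proof. exact: (linearD (trqr g)). Qed.
Lemma trqZl a (f g : fn) : trq (a *: f) g = a * trq f g.
Proof. rewrite /trq mulr_sumr; apply: eq_bigr=> z _; rewrite !ffunE /GRing.scale /= mulrA. by []. Qed.
Lemma trqBl (f h g : fn) : trq (f - h) g = trq f g - trq h g.
Proof. exact: (linearB (trqr g)). Qed.
Lemma trq0l (g : fn) : trq 0 g = 0.
Proof. exact: (linear0 (trqr g)). Qed.
Lemma trq_suml I (r : seq I) P (F : I -> fn) g :
  trq (\sum_(i <- r | P i) F i) g = \sum_(i <- r | P i) trq (F i) g.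
Proof. exact: (linear_sum (trqr g)). Qed.
Lemma trqDr (f h g : fn) : trq g (f + h) = trq g f + trq g h.
Proof. by rewrite !(trqC g) trqDl. Qed.
Lemma trqZr a (f g : fn) : trq g (a *: f) = a * trq g f.
Proof. by rewrite !(trqC g) trqZl. Qed.
Lemma trq_sumr I (r : seq I) P (F : I -> fn) g :
  trq g (\sum_(i <- r | P i) F i) = \sum_(i <- r | P i) trq g (F i).
Proof. rewrite trqC trq_suml; apply: eq_bigr => i _; exact: trqC. Qed.
Lemma trq_mul (t f g : fn) : trq (fmul t f) g = trq f (fmul t g).
Proof. by apply: eq_bigr => z _; rewrite !ffunE mulrCA mulrA. Qed.

Lemma trq_nondeg (f : fn) : (forall g, trq f g = 0) -> f = 0.
Proof.
move=> H; apply/ffunP=> z; rewrite ffunE.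
have := H [ffun z' => if z' == z then (1 : K) else 0].
rewrite /trq (bigD1 z) //= big1 => [|z' nz]; rewrite !ffunE ?eqxx ?(negPf nz) ?mulr1 ?mulr0 //.
by rewrite addr0.
Qed.

Definition orthF (U : {vspace fn}) (f : fn) : {ffun 'I_(\dim U) -> K^o} :=
  [ffun i : 'I_(\dim U) => (trq f (tnth (vbasis U) i) : K^o)].
Lemma orthF_linear U : linear (orthF U).
Proof. move=> a f g; apply/ffunP=> i; rewrite !ffunE trqDl trqZl. by []. Qed.
HB.instance Definition _ U := GRing.isLinear.Build _ _ _ _ (orthF U) (orthF_linear U).
Lemma orthvE (U : {vspace fn}) : orthv U = lker (linfun (orthF U)).
Proof. by []. Qed.

Lemma orthvP (U : {vspace fn}) (f : fn) : reflect (forall u, u \in U -> trq f u = 0) (f \in orthv U).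
Proof.
rewrite orthvE memv_ker (lfunE (orthF U)); apply: (iffP eqP) => [H u uU | H].
  rewrite (coord_vbasis uU) trq_sumr big1 // => i _; rewrite trqZr.
  move/ffunP: H => /(_ i); rewrite !ffunE (tnth_nth 0) => ->.
  by rewrite mulr0.
apply/ffunP=> i; rewrite !ffunE H //; apply: vbasis_mem; exact: mem_tnth.
Qed.

Lemma prodv_mem (U W : {vspace fn}) u v : u \in U -> v \in W -> fmul u v \in prodv U W.
Proof.
move=> uU vW; rewrite (coord_vbasis uU) fmulC fmul_sumr; apply: rpred_sum => i _.
rewrite fmulZr fmulC (coord_vbasis vW) fmul_sumr rpredZ // rpred_sum // => j _.
rewrite fmulZr rpredZ // memv_span //; apply: allpairs_f; apply: mem_nth; by rewrite size_tuple.
Qed.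

Definition fdivr (a f : fn) : fn := fdiv f a.
Lemma fdiv_linear (a : fn) : linear (fdivr a).
Proof. move=> c f g; apply/ffunP=> z; rewrite !ffunE /= mulrDl.
by rewrite /GRing.scale /= mulrA. Qed.
HB.instance Definition _ (a : fn) := GRing.isLinear.Build _ _ _ _ (fdivr a) (fdiv_linear a).

Lemma one_V1 (E : {vspace fn}) alpha : alpha \in E -> regular alpha -> fone K Z \in V1of E alpha.
Proof.
move=> aE ra.
have ->: fone K Z = fdiv alpha alpha by apply/ffunP=> z; rewrite !ffunE divff.
rewrite {1}(coord_vbasis aE).
have -> : forall (F : 'I_(\dim E) -> fn), fdiv (\sum_i F i) alpha = \sum_i fdiv (F i) alpha.
  by move=> F; exact: (linear_sum (fdivr alpha)).
apply: rpred_sum => i _.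
rewrite -[fdiv _ _]/(fdivr alpha _) linearZ /= rpredZ // memv_span //; apply: map_f; apply: mem_nth.
by rewrite size_tuple.
Qed.

Section VkS.
Variable V1 : {vspace fn}.
Hypothesis oneV1 : fone K Z \in V1.

Lemma Vk_mul t f k : t \in V1 -> f \in Vk V1 k -> fmul t f \in Vk V1 k.+1.
Proof.
case: k => [|k] tV fV.
  by move: fV; rewrite memv0 => /eqP ->; rewrite fmul0r rpred0.
by rewrite fmulC; apply: prodv_mem.
Qed.

Lemma Vk_sub k : (Vk V1 k <= Vk V1 k.+1)%VS.
Proof. by apply/subvP => f fk; rewrite -(fmul1 f); apply: Vk_mul. Qed.

Lemma Vk_mono m k : (m <= k)%N -> (Vk V1 m <= Vk V1 k)%VS.
Proof.
elim: k => [|k IH]; first by rewrite leqn0 => /eqP ->.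
rewrite leq_eqVlt => /orP[/eqP -> //|]; rewrite ltnS => /IH H.
exact: subv_trans H (Vk_sub k).
Qed.
End VkS.

Lemma nondeg_split (U : {vspace fn}) : nondeg U -> forall f, exists2 a, a \in U & f - a \in orthv U.
Proof.
move=> nd f; pose F := linfun (orthF U).
have inj: (U :&: lker F = 0)%VS.
  apply/eqP; rewrite -subv0; apply/subvP=> h /memv_capP[hU hO].
  rewrite memv0; apply/eqP; apply: nd => // v vU.
  by move: hO; rewrite -orthvE => /orthvP; apply.
have full: (F @: U)%VS = fullv.
  apply/eqP; rewrite eqEdim subvf (limg_dim_eq inj) dimvf /dim /= card_ord muln1.
  by [].
have: F f \in (F @: U)%VS by rewrite full memvf.
case/memv_imgP => a aU Hfa; exists a => //.
by rewrite orthvE memv_ker linearB /= Hfa subrr.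
Qed.

Section Coef.
Variables (w : nat) (zz : K) (x' y' : nat -> K).
Hypothesis hxy : forall p, (p.+1 < w)%N -> x' p * y' p = zz ^+ 2.
Definition cf a b : K := (if a == b then zz else 0) + (if a == b.+1 then x' b else 0)
  + (if b == a.+1 then y' a else 0).
Definition kf a d : K := if a == d then zz ^+ 2 else if a == d.+1 then zz * x' d
  else if d == a.+1 then zz * y' a else if a == d.+2 then x' d.+1 * x' d
  else if d == a.+2 then y' a * y' a.+1 else 0.
Lemma coef_eq a b d : (a < w)%N -> (b < w)%N -> (d < w)%N -> (a <= b.+1)%N -> (b <= a.+1)%N ->
  (b <= d.+1)%N -> (d <= b.+1)%N -> cf a b * cf b d = kf a d.
Proof.
move=> aw bw dw h1 h2 h3 h4; rewrite /cf /kf.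
repeat (case: eqP => ?; try (exfalso; lia)); subst; rewrite ?(addr0, add0r, mul0r, mulr0); try ring.
all: first [by rewrite hxy | by rewrite mulrC hxy].
Qed.
End Coef.

Section Pol.
Variables (E : {vspace fn}) (alpha : fn) (w : nat).
Hypotheses (aE : alpha \in E) (pol : polarizing E alpha) (w1 : (1 <= w)%N)
  (stab : stable_from (V1of E alpha) w).
Local Notation V1 := (V1of E alpha).
Local Notation V k := (Vk V1 k).
Local Notation H p := (Hp V1 w p).
Local Notation S p := (\sum_(q < w.+1 | q != p :> nat) H q)%VS.
Local Notation pi p := (pip V1 w p).

Lemma oneV1 : fone K Z \in V1.
Proof. by apply: one_V1 => //; case: pol. Qed.

Lemma V_nd k : nondeg (V k).
Proof.
case: k => [|k]; last by case: pol => _; apply.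
by move=> u; rewrite memv0 => /eqP.
Qed.

Lemma V_w k : (V k <= V w)%VS.
Proof.
case: (leqP k w) => [kw|wk]; first exact: (@Vk_mono _ oneV1 _ _ kw).
by rewrite stab // ltnW.
Qed.

Lemma H_orth p : (p <= w)%N -> (H p <= orthv (V p))%VS.
Proof.
rewrite /Hp leq_eqVlt => /orP[/eqP ->|->]; first by rewrite ltnn.
exact: capvSl.
Qed.

Lemma H_V p : (p < w)%N -> (H p <= V p.+1)%VS.
Proof. by rewrite /Hp => ->; exact: capvSr. Qed.

Lemma H_Vw p : (p < w)%N -> (H p <= V w)%VS.
Proof. by move=> pw; apply: subv_trans (H_V _ pw) (V_w _). Qed.

Lemma split_step p : (p < w)%N -> forall v, v \in V p.+1 -> exists2 a, a \in V p & v - a \in H p.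
Proof.
move=> pw v vV; have [a aV ao] := nondeg_split _ (V_nd p) v.
exists a => //; rewrite /Hp pw memv_cap ao /= rpredB //.
exact: (subvP (@Vk_sub _ oneV1 p)).
Qed.

Lemma split_top v : exists2 a, a \in V w & v - a \in H w.
Proof.
have [a aV ao] := nondeg_split _ (V_nd w) v.
by exists a => //; rewrite /Hp ltnn.
Qed.

Lemma H_nd p : (p <= w)%N -> nondeg (H p).
Proof.
move=> pw h hH hO.
have hV : forall u, u \in V p -> trq h u = 0.
  by apply/orthvP; apply: (subvP (H_orth _ pw)).
move: pw; rewrite leq_eqVlt => /orP[/eqP pw|pw].
  subst p; apply: trq_nondeg => g.
  have [a aV ao] := split_top g.
  by rewrite -(subrK a g) trqDr hO // hV // addr0.
apply: (V_nd p.+1) => [|u uV]; first exact: (subvP (H_V _ pw)).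
have [a aV ao] := split_step _ pw _ uV.
by rewrite -(subrK a u) trqDr hO // hV // addr0.
Qed.

Lemma H_orthog_lt p q h g : (p < q)%N -> (q <= w)%N -> h \in H p -> g \in H q -> trq h g = 0.
Proof.
move=> pq qw hH gH; rewrite trqC.
have /orthvP : g \in orthv (V q) by apply: (subvP (H_orth _ qw)).
apply; apply: (subvP (Vk_mono _ oneV1 _ _ pq)); apply: (subvP (H_V _ (leq_trans pq qw))) => //.
Qed.

Lemma H_orthog p q h g : p != q -> (p <= w)%N -> (q <= w)%N -> h \in H p -> g \in H q -> trq h g = 0.
Proof.
move=> npq pw qw hH gH; case: (ltngtP p q) npq => // [pq|qp] _.
  exact: H_orthog_lt pq qw hH gH.
by rewrite trqC; exact: H_orthog_lt qp pw gH hH.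
Qed.


Lemma pipD p (u v : fn) : pi p (u + v) = pi p u + pi p v.
Proof. by rewrite /pip linearD. Qed.
Lemma pipB p (u v : fn) : pi p (u - v) = pi p u - pi p v.
Proof. by rewrite /pip linearB. Qed.
Lemma pipZ p a (u : fn) : pi p (a *: u) = a *: pi p u.
Proof. by rewrite /pip linearZ. Qed.
Lemma pip0 p : pi p 0 = 0.
Proof. by rewrite /pip linear0. Qed.
Lemma pip_sum p I (r : seq I) P (F : I -> fn) :
  pi p (\sum_(i <- r | P i) F i) = \sum_(i <- r | P i) pi p (F i).
Proof. by rewrite /pip linear_sum. Qed.
Lemma pip_in p v : pi p v \in H p.
Proof. exact: memv_pi. Qed.

Lemma V_sum k : (k <= w)%N -> (V k <= \sum_(q < w.+1 | (q < k)%N) H q)%VS.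
Proof.
elim: k => [|k IH] kw; first by rewrite /= sub0v.
apply/subvP => v vV; have [a aV ah] := split_step k kw v vV.
pose kk : 'I_w.+1 := Ordinal (leqW kw).
rewrite (bigD1 kk) /=; last by rewrite ltnSn.
have -> : (\sum_(q < w.+1 | (q < k.+1)%N && (q != kk)) H q = \sum_(q < w.+1 | (q < k)%N) H q)%VS.
  by apply: eq_bigl => q; rewrite -(inj_eq val_inj) /= ltnS leq_eqVlt; case: ltngtP.
rewrite -(subrK a v); apply: memv_add => //.
exact: (subvP (IH (ltnW kw))).
Qed.

Lemma full_sum v : v \in (\sum_(q < w.+1) H q)%VS.
Proof.
have [a aV ah] := split_top v.
rewrite -(subrK a v) (bigD1 ord_max) //=; apply: memv_add => //.
have := subvP (V_sum w (leqnn w)) a aV.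
have -> : (\sum_(q < w.+1 | (q < w)%N) H q = \sum_(q < w.+1 | q != ord_max) H q)%VS.
  by apply: eq_bigl => q; rewrite -(inj_eq val_inj) /= ltn_neqAle -ltnS ltn_ord andbT.
by [].
Qed.

Lemma S_orth p : (p <= w)%N -> (S p <= orthv (H p))%VS.
Proof.
move=> pw; apply/subv_sumP => i ip; apply/subvP => h hH; apply/orthvP => g gH.
exact: (H_orthog i p h g ip (ltn_ord i) pw hH gH).
Qed.

Lemma cap0 p : (p <= w)%N -> (H p :&: S p = 0)%VS.
Proof.
move=> pw; apply/eqP; rewrite -subv0; apply/subvP=> h /memv_capP[hH hS].
rewrite memv0; apply/eqP; apply: (H_nd p pw h hH) => g gH.
by move: (subvP (S_orth p pw) h hS) => /orthvP; apply.
Qed.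

Lemma pi_S p s : (p <= w)%N -> s \in S p -> pi p s = 0.
Proof.
move=> pw sS; have e := daddv_pi_add (cap0 p pw) (subvP (addvSr _ _) _ sS).
rewrite (daddv_pi_id _ sS) in e; last by rewrite capvC cap0.
by rewrite /pip; move/(canRL (addrK _)): e; rewrite subrr.
Qed.

Lemma pi_val p h s : (p <= w)%N -> h \in H p -> s \in S p -> pi p (h + s) = h.
Proof.
move=> pw hH sS; rewrite pipD (pi_S p s) // addr0 /pip daddv_pi_id //.
exact: cap0.
Qed.

Lemma split_at p (pw : (p < w.+1)%N) (h : 'I_w.+1 -> fn) :
  \sum_i h i = h (Ordinal pw) + \sum_(j < w.+1 | j != p :> nat) h j.
Proof.
rewrite (bigD1 (Ordinal pw)) //=; congr (_ + _).
Qed.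

Lemma pi_char p v : (p <= w)%N -> forall g, g \in H p -> trq (pi p v) g = trq v g.
Proof.
move=> pw g gH; have [h hH ->] := memv_sumP (full_sum v).
have pw' : (p < w.+1)%N by [].
have sS : \sum_(j < w.+1 | j != p :> nat) h j \in S p by apply: memv_sumr => j _; apply: hH.
rewrite (split_at p pw') pi_val //; last exact: (hH (Ordinal pw') isT).
rewrite trqDl; move: (subvP (S_orth p pw) _ sS) => /orthvP ->; first by rewrite addr0.
exact: gH.
Qed.

Lemma pi_unique p v u : (p <= w)%N -> u \in H p -> (forall g, g \in H p -> trq u g = trq v g) -> pi p v = u.
Proof.
move=> pw uH Hu; apply/eqP; rewrite -subr_eq0; apply/eqP; apply: (H_nd p pw).
  by rewrite rpredB // pip_in.
by move=> g gH; rewrite trqBl pi_char // Hu // subrr.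
Qed.

Lemma pi_zero p v : (p <= w)%N -> (forall g, g \in H p -> trq v g = 0) -> pi p v = 0.
Proof. by move=> pw Hv; apply: pi_unique => // [|g gH]; rewrite ?rpred0 // trq0l Hv. Qed.

Lemma pi_id p h : (p <= w)%N -> h \in H p -> pi p h = h.
Proof. by move=> pw hH; apply: pi_unique. Qed.

Lemma pi_other p q h : p != q -> (p <= w)%N -> (q <= w)%N -> h \in H q -> pi p h = 0.
Proof.
move=> npq pw qw hH; apply: pi_zero => // g gH.
by apply: (H_orthog q p h g) => //; rewrite eq_sym.
Qed.

Lemma pi_sum v : v = \sum_(i < w.+1) pi i v.
Proof.
have [h hH ev] := memv_sumP (full_sum v).
have ord_le : forall i : 'I_w.+1, (i <= w)%N by move=> i; rewrite -ltnS ltn_ord.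
rewrite {1}ev; apply: eq_bigr => i _; rewrite ev pip_sum (bigD1 i) //= pi_id ?hH ?ord_le //.
rewrite big1 ?addr0 // => j nji; apply: (pi_other i j) => //; rewrite ?ord_le ?hH //.
by rewrite (inj_eq val_inj) eq_sym.
Qed.

Lemma pi_Vw v : v \in V w -> pi w v = 0.
Proof.
move=> vV; apply: pi_zero => // g gH; rewrite trqC.
by move: (subvP (H_orth w (leqnn w)) _ gH) => /orthvP; apply.
Qed.

Lemma pi_sumVw v : v \in V w -> v = \sum_(i < w) pi i v.
Proof. by move=> vV; rewrite {1}(pi_sum v) big_ord_recr /= pi_Vw // addr0. Qed.

Lemma tH_V t b h : t \in V1 -> (b < w)%N -> h \in H b -> fmul t h \in V w.
Proof.
move=> tV bw hH; apply: (subvP (V_w b.+2)); apply: Vk_mul => //.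
exact: (subvP (H_V b bw)).
Qed.

Lemma band t a b h : t \in V1 -> (a < w)%N -> (b < w)%N -> h \in H b ->
  ~~ ((a <= b.+1)%N && (b <= a.+1)%N) -> pi a (fmul t h) = 0.
Proof.
move=> tV aw bw hH nab; apply: pi_zero; first exact: ltnW.
move=> g gH; have [ab|ba] : (b.+2 <= a)%N \/ (a.+2 <= b)%N by lia.
  rewrite trqC; move: (subvP (H_orth a (ltnW aw)) _ gH) => /orthvP; apply.
  apply: (subvP (Vk_mono _ oneV1 _ _ ab)); apply: Vk_mul => //.
  exact: (subvP (H_V b bw)).
rewrite trq_mul; move: (subvP (H_orth b (ltnW bw)) _ hH) => /orthvP; apply.
apply: (subvP (Vk_mono _ oneV1 _ _ ba)); apply: Vk_mul => //.
exact: (subvP (H_V a aw)).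
Qed.

Lemma sum_if1 n i (F : nat -> fn) :
  \sum_(j < n) (if (j : nat) == i then F j else 0) = if (i < n)%N then F i else 0.
Proof. by rewrite -big_mkcond big_ord1_eq. Qed.

Local Notation Tc t a b g := (Dcomp V1 w t a b g).

Lemma pi_Dcomp t p q g a : (a <= w)%N -> (p <= w)%N ->
  pi a (Tc t p q g) = if a == p then Tc t a q g else 0.
Proof.
move=> aw pw; have [->|nap] := eqVneq a p; first by apply: pi_id => //; exact: pip_in.
by apply: (pi_other a p) => //; exact: pip_in.
Qed.

Section Main.
Variables (zz : K) (x y : 'I_w.-1 -> K).
Hypothesis hxy0 : forall p, x p * y p = zz ^+ 2.
Definition xx (n : nat) : K := oapp x 0 (insub n).
Definition yy (n : nat) : K := oapp y 0 (insub n).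
Lemma xxE (i : 'I_w.-1) : xx i = x i. Proof. by rewrite /xx valK. Qed.
Lemma yyE (i : 'I_w.-1) : yy i = y i. Proof. by rewrite /yy valK. Qed.
Lemma hxy p : (p.+1 < w)%N -> xx p * yy p = zz ^+ 2.
Proof.
rewrite -ltn_predRL => pw; have -> : p = nat_of_ord (Ordinal pw) by [].
by rewrite xxE yyE.
Qed.
Local Notation c := (cf zz xx yy).
Local Notation Dz t g := (Dzxy V1 w zz x y t g).

Lemma piD t g a : (a < w)%N -> pi a (Dz t g) = \sum_(b < w) c a b *: Tc t a b g.
Proof.
move=> aw; have aw' := ltnW aw.
have ordw : forall p : 'I_w, (p <= w)%N by move=> p; exact: ltnW.
have ordw1 : forall p : 'I_w.-1, (p.+1 <= w)%N.
  by move=> p; apply: ltnW; rewrite -ltn_predRL ltn_ord.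
rewrite /Dzxy !pipD pipZ !pip_sum.
have e1 : \sum_(p < w) pi a (Tc t p p g) = Tc t a a g.
  rewrite (eq_bigr (fun p : 'I_w => if (p : nat) == a then Tc t a p g else 0)).
    by rewrite (sum_if1 w a (fun j => Tc t a j g)) aw.
  by move=> p _; rewrite pi_Dcomp // eq_sym.
have e1' : \sum_(b < w) (if a == b then zz else 0) *: Tc t a b g = zz *: Tc t a a g.
  rewrite (eq_bigr (fun p : 'I_w => if (p : nat) == a then zz *: Tc t a p g else 0)).
    by rewrite (sum_if1 w a (fun j => zz *: Tc t a j g)) aw.
  by move=> p _; rewrite eq_sym; case: eqP => _; rewrite ?scale0r.
have e2 : \sum_(p < w.-1) pi a (x p *: Tc t p.+1 p g)
    = \sum_(b < w) (if a == b.+1 then xx b else 0) *: Tc t a b g.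
  case: a aw aw' {e1 e1'} => [|a] aw aw'.
    rewrite !big1 // => p _; first by rewrite scale0r.
    by rewrite pipZ pi_Dcomp //= scaler0.
  rewrite (eq_bigr (fun p : 'I_w.-1 => if (p : nat) == a then xx p *: Tc t a.+1 p g else 0)).
    rewrite (sum_if1 w.-1 a (fun j => xx j *: Tc t a.+1 j g)) ltn_predRL aw.
    rewrite (eq_bigr (fun p : 'I_w => if (p : nat) == a then xx p *: Tc t a.+1 p g else 0)).
      by rewrite (sum_if1 w a (fun j => xx j *: Tc t a.+1 j g)) (ltnW aw).
    by move=> p _; rewrite eqSS eq_sym; case: eqP => _; rewrite ?scale0r.
  move=> p _; rewrite pipZ pi_Dcomp //.
  by rewrite eqSS eq_sym xxE; case: eqP => _; rewrite ?scaler0.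
have e3 : \sum_(p < w.-1) pi a (y p *: Tc t p p.+1 g)
    = \sum_(b < w) (if (b : nat) == a.+1 then yy a else 0) *: Tc t a b g.
  rewrite (eq_bigr (fun p : 'I_w.-1 => if (p : nat) == a then yy p *: Tc t a p.+1 g else 0)).
    rewrite (sum_if1 w.-1 a (fun j => yy j *: Tc t a j.+1 g)) ltn_predRL.
    rewrite (eq_bigr (fun p : 'I_w => if (p : nat) == a.+1 then yy a *: Tc t a p g else 0)).
      by rewrite (sum_if1 w a.+1 (fun j => yy a *: Tc t a j g)).
    by move=> p _; case: eqP => _; rewrite ?scale0r.
  move=> p _; rewrite pipZ pi_Dcomp //; last by apply: ltnW; exact: ordw1.
  rewrite eq_sym yyE; case: eqP => [->|_]; by rewrite ?scaler0.
rewrite e1 e2 e3 -e1'.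
rewrite -big_split -big_split /=; apply: eq_bigr => b _.
by rewrite /cf !scalerDl.
Qed.


Local Notation k := (kf zz xx yy).

Lemma term_eq t t' f a b d : t \in V1 -> t' \in V1 -> (a < w)%N -> (b < w)%N -> (d < w)%N ->
  (c a b * c b d) *: pi a (fmul t (pi b (fmul t' (pi d f))))
  = k a d *: pi a (fmul t (pi b (fmul t' (pi d f)))).
Proof.
move=> tV t'V aw bw dw.
case bd: ((b <= d.+1)%N && (d <= b.+1)%N); last first.
  rewrite (band t' b d (pi d f)) ?pip_in ?bd //.
  by rewrite fmul0r pip0 !scaler0.
case ab: ((a <= b.+1)%N && (b <= a.+1)%N); last first.
  by rewrite (band t a b) ?pip_in ?ab // !scaler0.
move/andP: ab => [h1 h2]; move/andP: bd => [h3 h4].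
by rewrite (coef_eq w zz xx yy hxy a b d aw bw dw h1 h2 h3 h4).
Qed.

Lemma DD t t' f a : t \in V1 -> t' \in V1 -> (a < w)%N ->
  pi a (Dz t (Dz t' f)) = \sum_(d < w) k a d *: pi a (fmul t (fmul t' (pi d f))).
Proof.
move=> tV t'V aw; rewrite piD //.
rewrite (eq_bigr (fun b : 'I_w => \sum_(d < w) k a d *: pi a (fmul t (pi b (fmul t' (pi d f)))))); last first.
  move=> b _; rewrite /Dcomp piD // fmul_sumr pip_sum scaler_sumr.
  apply: eq_bigr => d _; rewrite fmulZr pipZ scalerA /Dcomp.
  exact: term_eq.
rewrite exchange_big /=; apply: eq_bigr => d _.
rewrite -scaler_sumr -pip_sum -fmul_sumr -pi_sumVw //.
apply: (tH_V t' d) => //; exact: pip_in.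
Qed.

Lemma comm_pi t t' f a : t \in V1 -> t' \in V1 -> (a < w)%N ->
  pi a (Dz t (Dz t' f)) = pi a (Dz t' (Dz t f)).
Proof.
move=> tV t'V aw; rewrite !DD //; apply: eq_bigr => d _.
by rewrite fmulA (fmulC t t') -fmulA.
Qed.

Lemma Dz_Vw t g : Dz t g \in V w.
Proof.
have HT : forall a b, (a < w)%N -> Tc t a b g \in V w.
  by move=> a b aw; apply: (subvP (H_Vw a aw)); exact: pip_in.
rewrite /Dzxy; apply: rpredD; first apply: rpredD.
- by apply: rpredZ; apply: rpred_sum => p _; apply: HT.
- by apply: rpred_sum => p _; apply: rpredZ; apply: HT; rewrite -ltn_predRL.
- by apply: rpred_sum => p _; apply: rpredZ; apply: HT; apply: leq_trans (ltn_ord p) (leq_pred w).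
Qed.

Lemma Dz_comm t t' f : t \in V1 -> t' \in V1 -> Dz t (Dz t' f) = Dz t' (Dz t f).
Proof.
move=> tV t'V; apply/eqP; rewrite -subr_eq0; apply/eqP.
have Gw : Dz t (Dz t' f) - Dz t' (Dz t f) \in V w by rewrite rpredB // Dz_Vw.
rewrite [LHS](pi_sumVw _ Gw).
by apply: big1 => a _; rewrite pipB comm_pi // subrr.
Qed.
End Main.
End Pol.
End S.

Theorem mainTheorem9 (Z : finType) (E : {vspace fnZ Cplx Z}) (alpha : fnZ Cplx Z)
  (w : nat) :
  alpha \in E ->
  polarizing E alpha ->
  is_w (V1of E alpha) w ->
  (2 <= w)%N ->
  forall (zz : Cplx) (x y : 'I_w.-1 -> Cplx),
  (forall p : 'I_w.-1, x p * y p = zz ^+ 2) ->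
  forall t t' : fnZ Cplx Z,
  t \in Hp (V1of E alpha) w 0 -> t' \in Hp (V1of E alpha) w 0 ->
  forall f : fnZ Cplx Z, f \in Vk (V1of E alpha) w ->
  Dzxy (V1of E alpha) w zz x y t (Dzxy (V1of E alpha) w zz x y t' f)
  = Dzxy (V1of E alpha) w zz x y t' (Dzxy (V1of E alpha) w zz x y t f).
Proof.
move=> aE pol [w1 stab _] w2 zz x y hxy t t' tH t'H f fV.
have tV : t \in V1of E alpha by move: tH; rewrite /Hp w1 => /memv_capP[].
have t'V : t' \in V1of E alpha by move: t'H; rewrite /Hp w1 => /memv_capP[].
exact: (Dz_comm Cplx Z E alpha w aE pol w1 stab zz x y hxy t t' f tV t'V).
Qed.
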